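(* Let $X$ be a nonempty set, $G\le S_X$, and let $(G,(\lambda_x:x\in X/G))$ and $(G,(\kappa_x:x\in X/G))$ be rack envelopes (resp. quandle envelopes). For every $x\in X/G$ and $y\in xG$ let $g_y\in G$ be such that $xg_y=y$. Then the corresponding racks (resp. quandles) $\mathbf R(G,(\lambda_x))$ and $\mathbf R(G,(\kappa_x))$ are isomorphic if and only if there is $f\in N_{S_X}(G)$ such that $$\kappa_x=((\lambda_{yg_y^{-1}})^{g_y})^f$$ for every $x\in X/G$, where $y=xf^{-1}$.
   Context: Permutations act on the right ($xf$ is the image of $x$ under $f$; $fg$ means $f$ first, then $g$); $g^f=f^{-1}gf$, $f^G=\{f^g:g\in G\}$. For $G\le S_X$, $xG$ is the orbit of $x$, $G_x$ its stabilizer, $X/G$ a fixed complete set of orbit representatives; $C_G(H)$, $N_G(H)$, $Z(H)$ denote centralizer, normalizer and center. A left quasigroup is a groupoid $(X,* )$ whose left translations $L_x$ ($yL_x=x*y$) are bijections; a rack is a left quasigroup with $x*(y*z)=(x*y)*(x*z)$; a quandle is a rack with $x*x=x$; $\mathrm{LMlt}(X,* )=\langle L_x:x\in X\rangle$. A pair $(G,(\lambda_x:x\in X/G))$ with $G\le S_X$ is a rack envelope (resp. quandle envelope) if $\lambda_x\in C_G(G_x)$ (resp. $\lambda_x\in Z(G_x)$) for every $x\in X/G$ and $\langle\bigcup_{x\in X/G}\lambda_x^G\rangle=G$. The rack corresponding to such an envelope is $\mathbf R(G,\Lambda)=(X,* )$ defined by $L_y=(\lambda_x)^{g}$ whenever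 $x\in X/G$, $y\in xG$ and $g\in G$ with $xg=y$ (independent of the choice of $g$); its left multiplication group is $G$. *)

(* Defs.v *)
(* Convention (paper): permutations act on the right, x f = f x here,
   and "f g" (f first, then g) is the function g \o f.
   Conjugation h = g^f = f^{-1} g f is expressed without inverses by
   is_conj g f h  :<->  forall z, h (f z) = f (g z). *)
From mathcomp Require Import ssreflect ssrfun ssrbool.

Set Implicit Arguments.
Unset Strict Implicit.
Unset Printing Implicit Defensive.

Section Defs.
Variable X : Type.

Definition is_conj (g f h : X -> X) : Prop := forall z, h (f z) = f (g z).

Definition commute_fun (f g : X -> X) : Prop := forall z, f (g z) = g (f z).

Definition is_perm_group (G : (X -> X) -> Prop) : Prop :=
  [/\ (forall g, G g -> bijective g),
      G id,
      (forall g h, G g -> G h -> G (h \o g)) &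
      (forall g, G g -> exists h, [/\ G h, cancel g h & cancel h g])].

Definition in_orbit (G : (X -> X) -> Prop) (x y : X) : Prop :=
  exists g, G g /\ g x = y.

Definition in_stab (G : (X -> X) -> Prop) (x : X) (g : X -> X) : Prop :=
  G g /\ g x = x.

Definition orbit_transversal (G : (X -> X) -> Prop) (T : X -> Prop) : Prop :=
  (forall y, exists x, T x /\ in_orbit G x y) /\
  (forall x x', T x -> T x' -> in_orbit G x x' -> x = x').

Definition generated (S : (X -> X) -> Prop) (f : X -> X) : Prop :=
  forall H, is_perm_group H -> (forall s, S s -> H s) -> H f.

Definition conj_classes_of (G : (X -> X) -> Prop) (T : X -> Prop)
  (lam : X -> (X -> X)) (s : X -> X) : Prop :=
  exists x g, [/\ T x, G g & is_conj (lam x) g s].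

Definition in_centralizer_stab (G : (X -> X) -> Prop) (x : X) (l : X -> X) : Prop :=
  G l /\ (forall s, in_stab G x s -> commute_fun l s).

Definition in_center_stab (G : (X -> X) -> Prop) (x : X) (l : X -> X) : Prop :=
  in_stab G x l /\ (forall s, in_stab G x s -> commute_fun l s).

Definition rack_envelope (G : (X -> X) -> Prop) (T : X -> Prop)
  (lam : X -> (X -> X)) : Prop :=
  (forall x, T x -> in_centralizer_stab G x (lam x)) /\
  (forall f, generated (conj_classes_of G T lam) f <-> G f).

Definition quandle_envelope (G : (X -> X) -> Prop) (T : X -> Prop)
  (lam : X -> (X -> X)) : Prop :=
  (forall x, T x -> in_center_stab G x (lam x)) /\
  (forall f, generated (conj_classes_of G T lam) f <-> G f).

(* op is the rack R(G, lam): op y z = y * z = z L_y, with L_y = (lam_x)^g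
   whenever x \in X/G, g \in G, x g = y. *)
Definition rack_of (G : (X -> X) -> Prop) (T : X -> Prop)
  (lam : X -> (X -> X)) (op : X -> X -> X) : Prop :=
  forall x g y, T x -> G g -> g x = y -> is_conj (lam x) g (op y).

Definition groupoid_iso (op1 op2 : X -> X -> X) : Prop :=
  exists phi : X -> X, bijective phi /\
    forall a b, phi (op1 a b) = op2 (phi a) (phi b).

Definition in_sym_normalizer (G : (X -> X) -> Prop) (f : X -> X) : Prop :=
  bijective f /\ (forall g h, is_conj g f h -> (G g <-> G h)).

(* the condition of Proposition 3.5: kappa_x = ((lambda_{y g_y^{-1}})^{g_y})^f,
   y = x f^{-1}, for every x \in X/G *)
Definition envelope_transport (T : X -> Prop)
  (gy : X -> (X -> X)) (lam kap : X -> (X -> X)) (f : X -> X) : Prop :=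
  forall x y w, T x -> f y = x -> gy y w = y ->
    exists h, is_conj (lam w) (gy y) h /\ is_conj h f (kap x).

End Defs.

(* Main.v *)
Require Import Defs.
From mathcomp Require Import ssreflect ssrfun ssrbool.
From Stdlib Require Import FunctionalExtensionality.

Lemma pg_surj (X : Type) (G : (X -> X) -> Prop) g :
  is_perm_group G -> G g -> forall z, exists u, g u = z.
Proof.
case=> bij _ _ _ Gg z; case: (bij g Gg) => g' _ c2; by exists (g' z).
Qed.

Lemma pg_inj (X : Type) (G : (X -> X) -> Prop) g :
  is_perm_group G -> G g -> injective g.
Proof. case=> bij _ _ _ Gg; exact: bij_inj (bij g Gg). Qed.

Lemma rack_conj (X : Type) (G : (X -> X) -> Prop) T lam op :
  is_perm_group G -> orbit_transversal G T -> rack_of G T lam op ->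
  forall a g, G g -> forall z, op (g a) (g z) = g (op a z).
Proof.
move=> pG [tr1 _] R a g Gg z.
have [r [Tr [k [Gk kr]]]] := tr1 a.
have [u <-] := @pg_surj _ _ _ pG Gk z.
have Gc : G (g \o k) by case: pG => _ _ c _; exact: c.
have e1 := R r k a Tr Gk kr u.
have e2 := R r (g \o k) (g a) Tr Gc (congr1 g kr) u.
rewrite /= in e2; by rewrite e2 e1.
Qed.

Lemma rack_G (X : Type) (G : (X -> X) -> Prop) T lam op :
  is_perm_group G -> orbit_transversal G T -> rack_of G T lam op ->
  (forall x, T x -> G (lam x)) -> forall a, G (op a).
Proof.
move=> pG [tr1 _] R Gl a.
have [r [Tr [k [Gk kr]]]] := tr1 a.
have pG' := pG; case: pG' => _ _ c inv.
have [h [Gh c1 c2]] := inv k Gk.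
have -> : op a = k \o (lam r \o h).
  apply: functional_extensionality => z /=.
  by rewrite -{1}(c2 z) (R r k a Tr Gk kr).
apply: (c) => //; apply: (c) => //; exact: Gl.
Qed.

Lemma cc_op (X : Type) (G : (X -> X) -> Prop) T lam op s :
  is_perm_group G -> rack_of G T lam op ->
  conj_classes_of G T lam s -> exists a, s = op a.
Proof.
move=> pG R [x [k [Tx Gk ic]]]; exists (k x).
apply: functional_extensionality => z.
have [u <-] := @pg_surj _ _ _ pG Gk z.
by rewrite ic (R x k (k x) Tx Gk erefl u).
Qed.

Lemma normalize (X : Type) (G : (X -> X) -> Prop) T lam kap op1 op2 phi psi :
  is_perm_group G -> orbit_transversal G T ->
  rack_envelope G T lam -> rack_envelope G T kap ->
  rack_of G T lam op1 -> rack_of G T kap op2 ->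
  cancel phi psi -> cancel psi phi ->
  (forall a b, phi (op1 a b) = op2 (phi a) (phi b)) ->
  forall g, G g -> G (phi \o g \o psi).
Proof.
move=> pG tr [El Gen1] [Ek _] R1 R2 c1 c2 hom g Gg.
have pG' := pG; case: pG' => bij Gid cmp inv.
have Gop2 := @rack_G _ _ _ _ _ pG tr R2 (fun x Tx => (Ek x Tx).1).
have Gop1 := @rack_G _ _ _ _ _ pG tr R1 (fun x Tx => (El x Tx).1).
suff: bijective g /\ G (phi \o g \o psi) by case.
apply: ((Gen1 g).2 Gg (fun g => bijective g /\ G (phi \o g \o psi))).
- split.
  + by move=> h [].
  + split; first by exists id.
    have -> : phi \o id \o psi = id by apply: functional_extensionality => z /=.
    exact: Gid.
  + move=> h1 h2 [b1 G1] [b2 G2]; split; first exact: bij_comp.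
    have -> : phi \o (h2 \o h1) \o psi = (phi \o h2 \o psi) \o (phi \o h1 \o psi).
      by apply: functional_extensionality => z /=; rewrite c1.
    exact: cmp.
  + move=> h [[h' e1 e2] Gh].
    have [k [Gk k1 k2]] := inv _ Gh.
    exists h'; split => //; split; first by exists h.
    have -> : phi \o h' \o psi = k; last exact: Gk.
    apply: functional_extensionality => z /=.
    by rewrite -{1}(k1 (phi (h' (psi z)))) /= c1 e2 c2.
- move=> s cs; have [a ->] := @cc_op _ _ _ _ _ _ pG R1 cs.
  split; first exact: bij (Gop1 a).
  have -> : phi \o op1 a \o psi = op2 (phi a).
    by apply: functional_extensionality => z /=; rewrite hom c2.
  exact: Gop2.
Qed.

Lemma rack_version (X : Type) (G : (X -> X) -> Prop) (T : X -> Prop)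
  (gy : X -> (X -> X)) (lam kap : X -> (X -> X)) :
  is_perm_group G ->
  orbit_transversal G T ->
  (forall x y, T x -> in_orbit G x y -> G (gy y) /\ gy y x = y) ->
  rack_envelope G T lam -> rack_envelope G T kap ->
   forall op1 op2, rack_of G T lam op1 -> rack_of G T kap op2 ->
   (groupoid_iso op1 op2 <->
    exists f, in_sym_normalizer G f /\ envelope_transport T gy lam kap f).
Proof.
move=> pG tr hgy E1 E2 op1 op2 R1 R2.
have pG' := pG; case: pG' => bij Gid cmp inv.
have kapE : forall x z, T x -> op2 x z = kap x z.
  by move=> x z Tx; exact: (R2 x id x Tx Gid erefl z).
split.
- case=> phi [[psi c1 c2] hom].
  have hom' : forall a b, psi (op2 a b) = op1 (psi a) (psi b).
    by move=> a b; rewrite -{1}(c2 a) -{1}(c2 b) -hom c1.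
  exists phi; split.
  + split; first by exists psi.
    move=> g h ic.
    have eh : h = phi \o g \o psi.
      by apply: functional_extensionality => z /=; rewrite -{1}(c2 z) ic.
    split => [Gg|Gh].
    * rewrite eh; exact: (@normalize _ _ _ _ _ _ _ _ _ pG tr E1 E2 R1 R2 c1 c2 hom).
    * have := @normalize _ _ _ _ _ _ _ _ _ pG tr E2 E1 R2 R1 c2 c1 hom' _ Gh.
      have -> : psi \o h \o phi = g; last by [].
      by apply: functional_extensionality => z /=; rewrite ic c1.
  + move=> x y w Tx fy gw.
    have [r [Tr orb]] := tr.1 y.
    have [Gg gr] := hgy r y Tr orb.
    have wr : w = r by apply: (@pg_inj _ _ _ pG Gg); rewrite gw gr.
    subst w.
    exists (op1 y); split; first exact: (R1 r (gy y) y Tr Gg gr).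
    by move=> z; rewrite -kapE // -fy -hom.
- case=> f [[[finv c1 c2] nrm] trn].
  exists f; split; first by exists finv.
  move=> a z.
  have [x [Tx [g [Gg gx]]]] := tr.1 (f a).
  pose y := finv x.
  have fy : f y = x by rewrite /y c2.
  have [r [Tr orb]] := tr.1 y.
  have [Ggy gr] := hgy r y Tr orb.
  have [h [ic1 ic2]] := trn x y r Tx fy gr.
  have hE : forall u, h u = op1 y u.
    move=> u; have [v <-] := @pg_surj _ _ _ pG Ggy u.
    by rewrite ic1 (R1 r (gy y) y Tr Ggy gr v).
  pose g' := finv \o g \o f.
  have Gg' : G g'.
    apply: (nrm g' g _).2 Gg => v; by rewrite /g' /= c2.
  have g'y : g' y = a by rewrite /g' /= fy gx c1.
  have [u <-] := @pg_surj _ _ _ pG Gg' z.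
  rewrite -{1}g'y (@rack_conj _ _ _ _ _ pG tr R1 y _ Gg' u).
  rewrite /g' /= c2 -hE -ic2 -kapE // -gx.
  by rewrite c2 (@rack_conj _ _ _ _ _ pG tr R2 x _ Gg).
Qed.

Theorem proposition3p5 (X : Type) (G : (X -> X) -> Prop) (T : X -> Prop)
  (gy : X -> (X -> X)) (lam kap : X -> (X -> X)) :
  inhabited X ->
  is_perm_group G ->
  orbit_transversal G T ->
  (forall x y, T x -> in_orbit G x y -> G (gy y) /\ gy y x = y) ->
  (* rack envelopes *)
  (rack_envelope G T lam -> rack_envelope G T kap ->
   forall op1 op2, rack_of G T lam op1 -> rack_of G T kap op2 ->
   (groupoid_iso op1 op2 <->
    exists f, in_sym_normalizer G f /\ envelope_transport T gy lam kap f)) /\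
  (* quandle envelopes *)
  (quandle_envelope G T lam -> quandle_envelope G T kap ->
   forall op1 op2, rack_of G T lam op1 -> rack_of G T kap op2 ->
   (groupoid_iso op1 op2 <->
    exists f, in_sym_normalizer G f /\ envelope_transport T gy lam kap f)).
Proof.
move=> _ pG tr hgy; split; first exact: rack_version.
have q2r : forall l, quandle_envelope G T l -> rack_envelope G T l.
  move=> l [E1 E2]; split => // x Tx.
  by case: (E1 x Tx) => [[Gl _] cm]; split.
move=> Q1 Q2; exact: rack_version (q2r _ Q1) (q2r _ Q2).
Qed.
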